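(* Let $A=(a_{ij})$ be column-stochastic and compatible with the strongly connected digraph $\mathcal G$ with parameter $\bar m$, let $(i^k,\mathbf d^k)$ satisfy the asynchrony model with constants $T,D$, and let $\widehat{\mathbf A}^k=\mathbf S^k\mathbf C^k\in\mathbb R^{S\times S}$ be the augmented matrices defined in the context. Then for all $k\in\mathbb N_0$: (a) $\widehat{\mathbf A}^k$ is column-stochastic; (b) every entry in the rows indexed by $\mathcal V$ (the computing agents) of $\widehat{\mathbf A}^{k+K_1-1:k}$ is at least $\eta=\bar m^{K_1}$, where $K_1=(2I-1)T+ID$.
   Context: $\mathcal G=(\mathcal V,\mathcal E)$, $\mathcal V=\{1,\dots,I\}$, strongly connected digraph without self-loops; $(j,i)\in\mathcal E$ means $j$ sends to $i$; $\mathcal N_i^{\rm in}=\{j:(j,i)\in\mathcal E\}$, $\mathcal N_i^{\rm out}=\{j:(i,j)\in\mathcal E\}$. Compatibility with parameter $\bar m\in(0,1)$: $a_{ii}\ge\bar m$, $a_{ij}\ge\bar m$ for $(j,i)\in\mathcal E$, $a_{ij}=0$ otherwise. Asynchrony model: $(i^k,\mathbf d^k)$, $i^k\in\mathcal V$, $\mathbf d^k=(d_j^k)_{j\in\mathcal N^{\rm in}_{i^k}}$, every agent appears among $i^k,\dots,i^{k+T-1}$ for all $k$, $0\le d_j^k\le D$. Counters: $\tau_{ij}^{-1}=-D$ for $(j,i)\in\mathcal E$; $\tau_{i^kj}^k=\max(\tau_{i^kj}^{k-1},k-d_j^k)$ for $j\in\mathcal N^{\rm in}_{i^k}$, and $\tau_{ij}^k=\tau_{ij}^{k-1}$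 for $i\ne i^k$. Augmented index set $\widehat{\mathcal V}=\mathcal V\cup\{(j,i)^d:(j,i)\in\mathcal E,\ d=0,\dots,D\}$ (virtual nodes), $S=|\widehat{\mathcal V}|=I+(D+1)|\mathcal E|$. Let $R^k=\{(j,i^k)^d: j\in\mathcal N^{\rm in}_{i^k},\ k-\tau^k_{i^kj}\le d\le D\}$. Sum matrix $\mathbf C^k$: $C^k_{hm}=1$ if $h=i^k$ and $m\in R^k$; $C^k_{hm}=1$ if $h=m\in\widehat{\mathcal V}\setminus R^k$; $0$ otherwise. Push matrix $\mathbf S^k$: $S^k_{(i^k,j)^0,\,i^k}=a_{ji^k}$ for $j\in\mathcal N^{\rm out}_{i^k}$; $S^k_{i^ki^k}=a_{i^ki^k}$; $S^k_{hh}=1$ for $h\in\mathcal V\setminus\{i^k\}$; $S^k_{(i,j)^{d+1},(i,j)^d}=1$ for $(i,j)\in\mathcal E$, $0\le d\le D-1$; $S^k_{(i,j)^D,(i,j)^D}=1$ for $(i,j)\in\mathcal E$; all other entries $0$. $\widehat{\mathbf A}^{k:t}=\widehat{\mathbf A}^k\cdots\widehat{\mathbf A}^t$ ($=\widehat{\mathbf A}^t$ if $k=t$). *)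

(* Defs.v *)
From HB Require Import structures.
From mathcomp Require Import all_boot all_order all_algebra.
Set Implicit Arguments. Unset Strict Implicit. Unset Printing Implicit Defensive.
Import Order.TTheory GRing.Theory Num.Theory.
Local Open Scope ring_scope.

Section Defs.
Variable R : realFieldType.

Definition col_stochastic (X : finType) (M : X -> X -> R) : Prop :=
  (forall h m, 0 <= M h m) /\ (forall m, \sum_(h : X) M h m = 1).

Definition mulF (X : finType) (M N : X -> X -> R) : X -> X -> R :=
  fun h m => \sum_(l : X) M h l * N l m.

Variables (I : nat) (E : rel 'I_I) (A : 'M[R]_I) (D : nat)
          (iseq : nat -> 'I_I) (dseq : nat -> 'I_I -> nat).

(* edges (j,i) with E j i : j sends to i *)
Definition edge := {p : 'I_I * 'I_I | E p.1 p.2}.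

(* augmented index set: agents (inl i) and virtual nodes (inr (e, d)) = e^d *)
Definition hatV : finType := ('I_I + (edge * 'I_D.+1))%type.

(* tau n i j = tau_{ij}^{n-1}; tau 0 i j = tau_{ij}^{-1} = -D *)
Fixpoint tau (n : nat) (i j : 'I_I) : int :=
  match n with
  | 0%N => - (D%:Z)
  | k.+1 => if (i == iseq k) && E j i
            then Order.max (tau k i j) (k%:Z - (dseq k j)%:Z)
            else tau k i j
  end.

Definition inRk (k : nat) (h : hatV) : bool :=
  match h with
  | inl _ => false
  | inr (e, d) => ((val e).2 == iseq k) &&
                  (k%:Z - tau k.+1 (iseq k) (val e).1 <= (d : nat)%:Z)
  end.

Definition Chat (k : nat) : hatV -> hatV -> R :=
  fun h m =>
    if (h == inl (iseq k)) && inRk k m then 1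
    else if (h == m) && ~~ inRk k m then 1 else 0.

Definition Shat (k : nat) : hatV -> hatV -> R :=
  fun h m =>
    match m with
    | inl i =>
        if i == iseq k then
          match h with
          | inl i' => if i' == i then A i i else 0
          | inr (e, d) => if ((val e).1 == i) && ((d : nat) == 0%N)
                          then A (val e).2 i else 0
          end
        else (if h == m then 1 else 0)
    | inr (e, d) =>
        if (d < D)%N then (if h == inr (e, inord (d.+1)) then 1 else 0)
        else (if h == m then 1 else 0)
    end.

Definition Ahat (k : nat) : hatV -> hatV -> R := mulF (Shat k) (Chat k).

(* Aprod t n = Ahat^{t+n : t} = Ahat^(t+n) * ... * Ahat^t *)
Fixpoint Aprod (t n : nat) : hatV -> hatV -> R :=
  match n with
  | 0%N => Ahat t
  | n'.+1 => mulF (Ahat (t + n)) (Aprod t n')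
  end.

End Defs.

(* Main.v *)
Require Import Defs.
From HB Require Import structures.
From mathcomp Require Import all_boot all_order all_algebra.
From mathcomp Require Import zify.
Import Order.TTheory GRing.Theory Num.Theory.
Local Open Scope ring_scope.

Lemma sum_edge (R : realFieldType) (I : nat) (E : rel 'I_I) (F : 'I_I * 'I_I -> R) :
  \sum_(e : edge E) F (val e) = \sum_(p | E p.1 p.2) F p.
Proof.
have H := (big_sub_cond (R:=R) (op := +%R) (idx := 0) [pred p : 'I_I * 'I_I | E p.1 p.2] xpredT F).
transitivity (\sum_(i in [pred p : 'I_I * 'I_I | E p.1 p.2] | true) F i); last first.
  by apply: eq_bigl => p; rewrite inE andbT.
rewrite H. exact: erefl.
Qed.

Lemma onehot_sum (R : realFieldType) (X : finType) (c : X) (a : R) :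
  \sum_(y : X) (if y == c then a else 0) = a.
Proof.
by rewrite (bigD1 c) //= eqxx big1 ?addr0 // => y /negbTE ->.
Qed.

Lemma onehot_sumM (R : realFieldType) (X : finType) (c : X) (F : X -> R) :
  \sum_(y : X) F y * (if y == c then 1 else 0) = F c.
Proof.
rewrite (bigD1 c) //= eqxx mulr1 big1 ?addr0 // => y /negbTE ->.
by rewrite mulr0.
Qed.

Section Proof.
Variables (R : realFieldType) (I : nat) (E : rel 'I_I) (A : 'M[R]_I)
  (mbar : R) (T D : nat) (iseq : nat -> 'I_I) (dseq : nat -> 'I_I -> nat).
Hypotheses (Hirr : forall i, ~~ E i i)
  (Hcol : col_stochastic (fun i j => A i j))
  (Hm : 0 < mbar < 1)
  (Hdiag : forall i, mbar <= A i i)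
  (Hedge : forall i j, E j i -> mbar <= A i j)
  (Hzero : forall i j, i != j -> ~~ E j i -> A i j = 0)
  (Hact : forall k (i : 'I_I), exists t, (k <= t < k + T)%N /\ iseq t = i)
  (Hdel : forall k j, E j (iseq k) -> (dseq k j <= D)%N).

Local Notation V := (@hatV I E D).
Local Notation S k := (@Shat R I E A D iseq k).
Local Notation C k := (@Chat R I E D iseq dseq k).
Local Notation Ah k := (@Ahat R I E A D iseq dseq k).

Definition ct k (z : V) : V := if inRk iseq dseq k z then inl (iseq k) else z.

Lemma C_onehot k l z : C k l z = if l == ct k z then 1 else 0.
Proof.
rewrite /Chat /ct; case: (inRk iseq dseq k z) => /=.
  rewrite andbT andbF; by case: ifP.
by rewrite andbF andbT.
Qed.

Lemma Ah_eq k y z : Ah k y z = S k y (ct k z).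
Proof.
rewrite /Ahat /mulF.
under eq_bigr => l _ do rewrite C_onehot.
by rewrite onehot_sumM.
Qed.

Lemma A_ge0 i j : 0 <= A i j.
Proof. by case: Hcol. Qed.

Lemma S_ge0 k y z : 0 <= S k y z.
Proof.
rewrite /Shat; case: z => [i | [e d]].
  case: ifP => _; last by case: ifP.
  case: y => [i'|[e' d']]; first by case: ifP => // _; apply: A_ge0.
  by case: ifP => // _; apply: A_ge0.
by case: ifP => _; case: ifP.
Qed.

Lemma Ah_ge0 k y z : 0 <= Ah k y z.
Proof. by rewrite Ah_eq S_ge0. Qed.

Lemma S_colsum k z : \sum_(y : V) S k y z = 1.
Proof.
case: z => [i | [e d]]; rewrite /Shat; last by case: (d < D)%N; rewrite onehot_sum.
case Hi: (i == iseq k); last by rewrite onehot_sum.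
rewrite big_sumType /= onehot_sum.
rewrite (eq_bigr (fun x : edge E * 'I_D.+1 => (if ((sval x.1).1 == i) && (x.2 == 0%N :> nat) then A (sval x.1).2 i else 0))); last by case.
rewrite -(pair_big xpredT xpredT (fun (e : edge E) (d : 'I_D.+1) => if ((sval e).1 == i) && (d == 0%N :> nat) then A (sval e).2 i else 0)) /=.
have -> : \sum_(e : edge E) \sum_(d < D.+1) (if ((sval e).1 == i) && (d == 0%N :> nat) then A (sval e).2 i else 0)
   = \sum_(e : edge E) (if (val e).1 == i then A (val e).2 i else 0).
  apply: eq_bigr => e _.
  rewrite (bigD1 ord0) //= andbT big1 ?addr0 // => d Hd.
  have -> : (d == 0%N :> nat) = false.
    by apply/negbTE; move: Hd; apply: contra => /eqP h; apply/eqP/val_inj.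
  by rewrite andbF.
rewrite (@sum_edge R I E (fun p => if p.1 == i then A p.2 i else 0)).
rewrite -(pair_big_dep xpredT (fun a b => E a b) (fun a b => if a == i then A b i else 0)) /=.
rewrite (bigD1 (P:=xpredT) i) //= [X in _ + (_ + X) = _]big1 ?addr0; last first.
  by move=> a /negbTE Ha; apply: big1 => b _; rewrite Ha.
under eq_bigr => b _ do rewrite eqxx.
case: Hcol => _ /(_ i) <-.
rewrite [RHS](bigD1 i) //=; congr (_ + _).
rewrite big_mkcond [RHS]big_mkcond /=; apply: eq_bigr => j _.
case: ifP => Eij.
  by case: eqP => // Hji; rewrite Hji (negbTE (Hirr i)) in Eij.
case: eqP => [-> //| /eqP Hji].
by rewrite Hzero // Eij.
Qed.


Lemma Ah_colstoch k : col_stochastic (Ah k).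
Proof.
split; first exact: Ah_ge0.
by move=> m; under eq_bigr => h _ do rewrite Ah_eq; rewrite S_colsum.
Qed.

Fixpoint P (k n : nat) : V -> V -> R :=
  match n with
  | 0%N => fun y x => if y == x then 1 else 0
  | n'.+1 => mulF (Ah (k + n')) (P k n')
  end.

Lemma P_ge0 k n y x : 0 <= P k n y x.
Proof.
elim: n y x => [|n IH] y x /=; first by case: ifP.
by apply: sumr_ge0 => l _; apply: mulr_ge0; [apply: Ah_ge0 | apply: IH].
Qed.

Lemma Aprod_P k n y x : @Aprod R I E A D iseq dseq k n y x = P k n.+1 y x.
Proof.
elim: n y x => [|n IH] y x /=.
  by rewrite /mulF addn0 onehot_sumM.
by rewrite /mulF; apply: eq_bigr => l _; rewrite IH.
Qed.

Lemma mbar_ge0 : 0 <= mbar.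
Proof. by case/andP: Hm => /ltW. Qed.

Definition Q k x t y := (k <= t)%N /\ mbar ^+ (t - k) <= P k (t - k) y x.

Lemma Q_init k x : Q k x k x.
Proof. by split => //; rewrite subnn /= eqxx expr0. Qed.

Lemma Q_step k x t y z : Q k x t z -> mbar <= Ah t y z -> Q k x t.+1 y.
Proof.
move=> [Hkt Hq] Ha; split; first by apply: leqW.
rewrite subSn // /= subnKC // exprS /mulF.
rewrite (bigD1 z) //= -[X in X <= _]addr0; apply: lerD.
  apply: ler_pM => //; [exact: mbar_ge0 | exact: exprn_ge0 mbar_ge0].
by apply: sumr_ge0 => l _; apply: mulr_ge0; [apply: Ah_ge0 | apply: P_ge0].
Qed.

Lemma Ah_self t i : mbar <= Ah t (inl i) (inl i).
Proof.
rewrite Ah_eq /ct /= /Shat; case: ifP => _ /=; first by rewrite eqxx.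
by rewrite eqxx; case/andP: Hm => _ /ltW.
Qed.

Lemma Q_wait k x t t' i : Q k x t (inl i) -> (t <= t')%N -> Q k x t' (inl i).
Proof.
move=> Hq /subnKC <-; elim: (t' - t)%N => [|n IH]; first by rewrite addn0.
by rewrite addnS; apply: Q_step IH _; apply: Ah_self.
Qed.


Definition vn (e : edge E) (n : nat) : V := inr (e, inord n).

Lemma Ah_push t j i (H : E j i) : iseq t = j ->
  mbar <= Ah t (vn (exist (fun p : 'I_I * 'I_I => E p.1 p.2) (j, i) H) 0) (inl j).
Proof.
move=> Hj; rewrite Ah_eq /ct /= /Shat -Hj eqxx /= inordK //=.
by apply: Hedge; rewrite Hj.
Qed.

Lemma Ah_shift t e n : (n <= D)%N -> ~~ inRk iseq dseq t (vn e n) ->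
  Ah t (vn e (minn n.+1 D)) (vn e n) = 1.
Proof.
move=> HnD Hr; rewrite Ah_eq /ct (negbTE Hr) /Shat /vn inordK ?ltnS //.
case: ltnP => HD.
  by rewrite (minn_idPl HD) eqxx.
have -> : n = D by apply/eqP; rewrite eqn_leq HnD.
by rewrite minnE subSnn subn1 /= eqxx.
Qed.

Lemma Ah_collect t e n : inRk iseq dseq t (vn e n) ->
  mbar <= Ah t (inl (sval e).2) (vn e n).
Proof.
move=> Hr; rewrite Ah_eq /ct Hr.
move: Hr; rewrite /inRk /vn => /andP [/eqP He _].
by rewrite /Shat He eqxx /=.
Qed.

Lemma inRk_D t e : (sval e).2 = iseq t -> inRk iseq dseq t (vn e D).
Proof.
move=> He; rewrite /inRk /vn He eqxx /= inordK //.
have HE : E (sval e).1 (iseq t) by rewrite -He; exact: (valP e).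
rewrite eqxx HE /=.
have Hd := Hdel t _ HE.
set M := Order.max _ _.
have HM : (t%:Z - (dseq t (sval e).1)%:Z <= M) by rewrite /M le_max lexx orbT.
rewrite lerBlDr; rewrite lerBlDr in HM.
apply: (le_trans HM); by rewrite [_ + M]addrC lerD2l lez_nat.
Qed.


Lemma chain k x t e n : (n <= D)%N -> Q k x t (vn e n) -> forall s,
  (exists t', (t < t' <= t + s)%N /\ Q k x t' (inl (sval e).2)) \/
  Q k x (t + s) (vn e (minn (n + s) D)).
Proof.
move=> HnD Hq; elim=> [|s IH].
  by right; rewrite !addn0 (minn_idPl HnD).
case: IH => [[t' [Ht' Hq']]|Hq'].
  by left; exists t'; split => //; lia.
set m := minn (n + s) D in Hq'.
have HmD : (m <= D)%N by rewrite geq_minr.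
case Hr: (inRk iseq dseq (t + s) (vn e m)).
  left; exists (t + s).+1; split; first lia.
  by apply: Q_step Hq' _; apply: Ah_collect.
right; rewrite addnS.
apply: Q_step Hq' _.
have -> : minn (n + s.+1) D = minn m.+1 D.
  by rewrite /m; lia.
by rewrite Ah_shift ?Hr // ; case/andP: Hm => _ /ltW.
Qed.


Lemma virt k x t e n : (n <= D)%N -> Q k x t (vn e n) ->
  exists t', (t < t' <= t + D + T)%N /\ Q k x t' (inl (sval e).2).
Proof.
move=> HnD Hq.
have [t0 [/andP [H1 H2] H3]] := Hact (t + D) (sval e).2.
have := @chain _ _ _ _ _ HnD Hq (t0 - t).
case=> [[t' [Ht' Hq']]|Hq'].
  by exists t'; split => //; lia.
have HD : minn (n + (t0 - t)) D = D by lia.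
rewrite HD in Hq'.
rewrite (subnKC (leq_trans (leq_addr D t) H1)) in Hq'.
exists t0.+1; split; first lia.
by apply: Q_step Hq' _; apply: Ah_collect; apply: inRk_D.
Qed.

Lemma hop k x t j i : Q k x t (inl j) -> E j i ->
  exists t', (t <= t' <= t + (2 * T + D))%N /\ Q k x t' (inl i).
Proof.
move=> Hq Hji.
have [t0 [/andP [H1 H2] H3]] := Hact t j.
have Hq0 := @Q_wait _ _ _ _ _ Hq H1.
have Hq1 := @Q_step _ _ _ _ _ Hq0 (@Ah_push _ _ _ Hji H3).
have [t' [Ht' Hq']] := @virt _ _ _ _ _ (leq0n D) Hq1.
by exists t'; split => //; lia.
Qed.

Lemma path_reach k x p : forall j t, path E j p -> Q k x t (inl j) ->
  exists t', (t <= t' <= t + size p * (2 * T + D))%N /\ Q k x t' (inl (last j p)).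
Proof.
elim: p => [|a p IH] j t /=.
  by move=> _ Hq; exists t; split => //; lia.
case/andP=> Hja Hp Hq.
have [t1 [Ht1 Hq1]] := @hop _ _ _ _ _ Hq Hja.
have [t2 [Ht2 Hq2]] := IH a t1 Hp Hq1.
by exists t2; split => //; lia.
Qed.

Lemma short_path (Hc : forall i j, connect E i j) j i :
  exists p, [/\ path E j p, last j p = i & (size p < I)%N].
Proof.
have /connectP [p Hp Hl] := Hc j i.
rewrite Hl; case: (shortenP Hp) => p' Hp' Hu _.
exists p'; split => //.
have := max_card (mem (j :: p')).
rewrite (card_uniqP Hu) card_ord /=.
by [].
Qed.


Lemma main_b (Hc : forall i j, connect E i j) k (i : 'I_I) (m : V) :
  let K1 := ((2 * I - 1) * T + I * D)%N in
  mbar ^+ K1 <= @Aprod R I E A D iseq dseq k (K1 - 1) (inl i) m.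
Proof.
cbv zeta; set K1 := ((2 * I - 1) * T + I * D)%N.
have HI : (0 < I)%N by case: i => i' /= Hi; apply: leq_ltn_trans Hi.
have HT : (0 < T)%N by have [t [/andP [_ Ht] _]] := Hact 0 i; lia.
have HK : (0 < K1)%N by rewrite /K1; nia.
rewrite Aprod_P subn1 prednK //.
suff [_ H] : Q k m (k + K1) (inl i) by rewrite addKn in H.
have Hgen : forall t j, (t <= k + K1 - (I.-1 * (2 * T + D)))%N -> Q k m t (inl j) -> Q k m (k + K1) (inl i).
  move=> t j Ht Hq.
  have [p [Hp Hl Hs]] := short_path Hc j i.
  have [t' [Ht' Hq']] := @path_reach _ _ _ _ _ Hp Hq.
  rewrite Hl in Hq'; apply: (@Q_wait _ _ _ _ _ Hq').
  have : (size p * (2 * T + D) <= I.-1 * (2 * T + D))%N.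
    by apply: leq_mul => //; rewrite -ltnS prednK.
  have : (I.-1 * (2 * T + D) <= K1)%N.
    rewrite /K1 -(prednK HI); set J := I.-1; nia.
  lia.
case: m Hgen => [j | [e d]] Hgen.
  apply: (Hgen k j) => //; last exact: Q_init.
  have : (I.-1 * (2 * T + D) <= K1)%N.
    rewrite /K1 -(prednK HI); set J := I.-1; nia.
  lia.
have Hv : (inr (e, d) : V) = vn e d by rewrite /vn inord_val.
have Hq0 : Q k (inr (e, d)) k (vn e d) by rewrite -Hv; apply: Q_init.
have Hd : (d <= D)%N by rewrite -ltnS ltn_ord.
have [t1 [Ht1 Hq1]] := @virt _ _ _ _ _ Hd Hq0.
apply: (Hgen t1 _ _ Hq1).
have : (I.-1 * (2 * T + D) + D + T = K1)%N.
  rewrite /K1 -(prednK HI); set J := I.-1; nia.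
lia.
Qed.

End Proof.

Theorem lemma3 (R : realFieldType) (I : nat) (E : rel 'I_I) (A : 'M[R]_I)
  (mbar : R) (T D : nat) (iseq : nat -> 'I_I) (dseq : nat -> 'I_I -> nat) :
  (* strongly connected digraph without self-loops *)
  (forall i, ~~ E i i) ->
  (forall i j, connect E i j) ->
  (* A column-stochastic *)
  col_stochastic (fun i j => A i j) ->
  (* compatibility with parameter mbar *)
  0 < mbar < 1 ->
  (forall i, mbar <= A i i) ->
  (forall i j, E j i -> mbar <= A i j) ->
  (forall i j, i != j -> ~~ E j i -> A i j = 0) ->
  (* asynchrony model *)
  (forall k (i : 'I_I), exists t, (k <= t < k + T)%N /\ iseq t = i) ->
  (forall k j, E j (iseq k) -> (dseq k j <= D)%N) ->
  forall k : nat,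
    col_stochastic (@Ahat R I E A D iseq dseq k) /\
    (forall (i : 'I_I) (m : @hatV I E D),
       let K1 := ((2 * I - 1) * T + I * D)%N in
       mbar ^+ K1 <= @Aprod R I E A D iseq dseq k (K1 - 1) (inl i) m).
Proof.
move=> Hirr Hc Hcol Hm Hdiag Hedge Hzero Hact Hdel k; split.
  by apply: Ah_colstoch.
move=> i m.
by apply: main_b.
Qed.
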